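(* Let $M$ be a monoid, $e\in M$ an idempotent, and $\mathfrak m\subseteq M$ a two-sided ideal with $\mathfrak m=\mathfrak m^2$. Then $\mathsf p_{Me}\pitchfork\mathbf{Sh}(\mathcal F_{\mathfrak m})$ if and only if $e\in\mathfrak m$.
   Context: $Me$ is a filtered left $M$-set; $\mathsf p_{Me}$ is the corresponding point of the topos of right $M$-sets, with direct image $\mathsf p_*(S)=\mathrm{Hom}_{\mathrm{Sets}}(Me,S)$, right action $(\alpha m)(a)=\alpha(ma)$. $\mathfrak m^2=\{xy\mid x,y\in\mathfrak m\}$. $\mathcal F_{\mathfrak m}$ is the Grothendieck topology consisting of all right ideals of $M$ containing $\mathfrak m$. A right $M$-set $X$ is an $\mathcal F_{\mathfrak m}$-sheaf if for every $\mathfrak a\in\mathcal F_{\mathfrak m}$ the map $X\to\mathrm{Hom}_M(\mathfrak a,X)$, $x\mapsto(y\mapsto xy)$, is a bijection; $\mathbf{Sh}(\mathcal F_{\mathfrak m})$ is the full subcategory of such sheaves. For a point $\mathsf p$, $\mathsf p\pitchfork\mathscr T$ means $\mathsf p_*(S)\in\mathscr T$ for every set $S$. *)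

(* Defs.v *)
Record Monoid := {
  mcar :> Type;
  mmul : mcar -> mcar -> mcar;
  mone : mcar;
  mmulA : forall x y z, mmul x (mmul y z) = mmul (mmul x y) z;
  mmul1l : forall x, mmul mone x = x;
  mmul1r : forall x, mmul x mone = x
}.

Arguments mmul {m}.
Arguments mone {m}.

Section Defs.
Variable M : Monoid.

Definition idempotent (e : M) : Prop := mmul e e = e.

Definition right_ideal (a : M -> Prop) : Prop :=
  forall x n, a x -> a (mmul x n).
Definition left_ideal (a : M -> Prop) : Prop :=
  forall x n, a x -> a (mmul n x).
Definition two_sided_ideal (a : M -> Prop) : Prop :=
  right_ideal a /\ left_ideal a.

Definition sqset (m : M -> Prop) : M -> Prop :=
  fun z => exists x y, m x /\ m y /\ z = mmul x y.

Definition is_right_action (X : Type) (act : X -> M -> X) : Prop :=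
  (forall x, act x mone = x) /\
  (forall x n k, act (act x n) k = act x (mmul n k)).

Definition is_hom_from (a : M -> Prop) (X : Type) (act : X -> M -> X)
  (f : {y : M | a y} -> X) : Prop :=
  forall y (py : a y) n (pyn : a (mmul y n)),
    f (exist _ (mmul y n) pyn) = act (f (exist _ y py)) n.

Definition in_F (m : M -> Prop) (a : M -> Prop) : Prop :=
  right_ideal a /\ (forall z, m z -> a z).

(* X is an F_m-sheaf: for every a in F_m, x |-> (y |-> x y) is a bijection
   X -> Hom_M(a, X). *)
Definition is_sheaf (m : M -> Prop) (X : Type) (act : X -> M -> X) : Prop :=
  forall a, in_F m a ->
    (forall x x', (forall s : {y : M | a y}, act x (proj1_sig s) = act x' (proj1_sig s)) -> x = x') /\
    (forall f, is_hom_from a X act f ->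
       exists x, forall s : {y : M | a y}, f s = act x (proj1_sig s)).

Definition Me (e : M) : Type := {a : M | exists k, a = mmul k e}.

Lemma Me_lmul_proof (e : M) (n : M) (a : Me e) :
  exists k, mmul n (proj1_sig a) = mmul k e.
Proof.
  destruct a as [a [k ->]]; simpl. exists (mmul n k). apply mmulA.
Qed.

Definition Me_lmul (e : M) (n : M) (a : Me e) : Me e :=
  exist _ (mmul n (proj1_sig a)) (Me_lmul_proof e n a).

(* p_*(S) = Hom_Sets(Me, S), with right action (alpha n)(a) = alpha(n a) *)
Definition pstar (e : M) (S : Type) : Type := Me e -> S.
Definition pstar_act (e : M) (S : Type) (alpha : pstar e S) (n : M) : pstar e S :=
  fun a => alpha (Me_lmul e n a).

Definition pitchfork_Sh (e : M) (m : M -> Prop) : Prop :=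
  forall S : Type, is_sheaf m (pstar e S) (pstar_act e S).

End Defs.

(* Main.v *)
Require Import Defs.
From Stdlib Require Import FunctionalExtensionality PropExtensionality ProofIrrelevance.

Definition eMe (M : Monoid) (e : M) : Me M e :=
  exist _ e (ex_intro _ mone (eq_sym (mmul1l M e))).

Lemma Me_eq (M : Monoid) (e : M) (a b : Me M e) : proj1_sig a = proj1_sig b -> a = b.
Proof.
  destruct a as [a pa], b as [b pb]; simpl; intros ->.
  f_equal; apply proof_irrelevance.
Qed.

Theorem lemma4p5 (M : Monoid) (e : M) (m : M -> Prop)
  (he : idempotent M e) (hm : two_sided_ideal M m)
  (hm2 : forall z, m z <-> sqset M m z) :
  pitchfork_Sh M e m <-> m e.
Proof.
  destruct hm as [hr hl]. split.
  - intros H. destruct (H Prop m (conj hr (fun z h => h))) as [Hinj _].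
    assert (Heq : (fun b : Me M e => proj1_sig b = e) = (fun b => proj1_sig b = e /\ m e)).
    { apply Hinj. intros [y py]; simpl. apply functional_extensionality.
      intros [c [k ->]]. unfold pstar_act, Me_lmul; simpl.
      apply propositional_extensionality; split; [|tauto].
      intros E. split; [exact E|]. rewrite <- E. apply hr. exact py. }
    pose proof (f_equal (fun g => g (eMe M e)) Heq) as H2. simpl in H2.
    assert (T : e = e) by reflexivity. rewrite H2 in T. tauto.
  - intros me S a [ar am]. split.
    + intros x x' Hx. apply functional_extensionality. intros b0.
      destruct b0 as [b [k Hb]] eqn:Eb.
      assert (ab : a b) by (apply am; rewrite Hb; apply hl; exact me).
      specialize (Hx (exist _ b ab)). simpl in Hx.
      pose proof (f_equal (fun g => g (eMe M e)) Hx) as Hy.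
      unfold pstar_act in Hy. idtac.
      assert (E : Me_lmul M e b (eMe M e) = b0).
      { apply Me_eq. simpl. rewrite Eb; simpl; rewrite Hb, <- mmulA, he. reflexivity. }
      rewrite E, Eb in Hy. exact Hy.
    + intros f Hf.
      assert (ab : forall b : Me M e, a (proj1_sig b)).
      { intros [b [k Hb]]; simpl. apply am; rewrite Hb; apply hl; exact me. }
      exists (fun b => f (exist _ (proj1_sig b) (ab b)) (eMe M e)).
      intros [s ps]. simpl. apply functional_extensionality. intros c.
      unfold pstar_act. simpl.
      rewrite (Hf s ps (proj1_sig c)). unfold pstar_act. f_equal.
      apply Me_eq. simpl. destruct c as [c [k Hc]]; simpl.
      rewrite Hc, <- mmulA, he. reflexivity.
Qed.
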